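(* Let $\tau\geq 1$ be a constant and let $u\neq v$ be points in the plane. Consider points $w$ with $\angle wuv\in[0,\pi/2)$, $\angle wvu\in[0,\pi/2)$ and $\tau|vw|<|uv|$, and the ratio $$\frac{|uw|}{|uv|-\tau|vw|}.$$ Then: (1) if $w$ is restricted to a compact segment of a circular arc centered at $u$, the ratio is maximized when $|vw|$ is largest; (2) if $w$ is restricted to a compact segment of a ray emanating from $v$, the ratio is maximized when $|vw|$ is largest; (3) if $w$ is restricted to a compact segment of a ray emanating from $u$, the maximum of the ratio is achieved at the position of $w$ making $|uw|$ largest or at the position making $|uw|$ smallest. *)

(* Defs.v *)
From Stdlib Require Import Reals Lra.
Open Scope R_scope.

Definition point := (R * R)%type.

Definition pdist (p q : point) : R :=
  sqrt ((fst p - fst q) ^ 2 + (snd p - snd q) ^ 2).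

Definition dot_at (a b c : point) : R :=
  (fst a - fst b) * (fst c - fst b) + (snd a - snd b) * (snd c - snd b).

Definition angle (a b c : point) : R :=
  acos (dot_at a b c / (pdist a b * pdist c b)).

Definition admissible (tau : R) (u v w : point) : Prop :=
  0 <= angle w u v < PI / 2 /\
  0 <= angle w v u < PI / 2 /\
  tau * pdist v w < pdist u v.

Definition ratio (tau : R) (u v w : point) : R :=
  pdist u w / (pdist u v - tau * pdist v w).

Definition on_circle (c : point) (r theta : R) : point :=
  (fst c + r * cos theta, snd c + r * sin theta).

Definition on_ray (c d : point) (t : R) : point :=
  (fst c + t * fst d, snd c + t * snd d).

(* Main.v *)
Require Import Defs.
From Stdlib Require Import Reals Lra.
Open Scope R_scope.

Lemma norm_tri a1 a2 b1 b2 :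
  sqrt ((a1+b1)^2+(a2+b2)^2) <= sqrt (a1^2+a2^2) + sqrt (b1^2+b2^2).
Proof.
  pose proof (sqrt_cauchy a1 a2 b1 b2) as C.
  assert (HA := sqrt_pos (a1^2+a2^2)). assert (HB := sqrt_pos (b1^2+b2^2)).
  rewrite <- (sqrt_square (sqrt (a1 ^ 2 + a2 ^ 2) + sqrt (b1 ^ 2 + b2 ^ 2))) by lra.
  apply sqrt_le_1_alt.
  assert (E1 : sqrt (a1^2+a2^2) * sqrt (a1^2+a2^2) = a1^2+a2^2) by (apply sqrt_sqrt; nra).
  assert (E2 : sqrt (b1^2+b2^2) * sqrt (b1^2+b2^2) = b1^2+b2^2) by (apply sqrt_sqrt; nra).
  unfold Rsqr in C.
  replace ((a1 + b1) ^ 2 + (a2 + b2) ^ 2) with ((a1^2+a2^2) + (b1^2+b2^2) + 2*(a1*b1+a2*b2)) by ring.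
  replace (a1 * a1 + a2 * a2) with (a1^2+a2^2) in C by ring.
  replace (b1 * b1 + b2 * b2) with (b1^2+b2^2) in C by ring.
  lra.
Qed.

Lemma norm_hom k a1 a2 : 0 <= k -> sqrt ((k*a1)^2+(k*a2)^2) = k * sqrt (a1^2+a2^2).
Proof.
  intro Hk. replace ((k*a1)^2+(k*a2)^2) with ((k*k) * (a1^2+a2^2)) by ring.
  rewrite sqrt_mult_alt by nra. rewrite sqrt_square by lra. reflexivity.
Qed.

Lemma pdist_tri x y z : pdist x z <= pdist x y + pdist y z.
Proof.
  unfold pdist.
  replace (fst x - fst z) with ((fst x - fst y) + (fst y - fst z)) by ring.
  replace (snd x - snd z) with ((snd x - snd y) + (snd y - snd z)) by ring.
  apply norm_tri.
Qed.

Lemma pdist_sym x y : pdist x y = pdist y x.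
Proof. unfold pdist; f_equal; ring. Qed.

Lemma ray_conv q c d al be t1 t2 : 0 <= al -> 0 <= be -> al + be = 1 ->
  pdist q (on_ray c d (al*t1+be*t2)) <=
  al * pdist q (on_ray c d t1) + be * pdist q (on_ray c d t2).
Proof.
  intros Ha Hb Hs. unfold pdist, on_ray; simpl fst; simpl snd.
  replace be with (1 - al) by lra.
  replace (fst q - (fst c + (al * t1 + (1 - al) * t2) * fst d)) with
    (al * (fst q - (fst c + t1 * fst d)) + (1-al) * (fst q - (fst c + t2 * fst d))) by ring.
  replace (snd q - (snd c + (al * t1 + (1 - al) * t2) * snd d)) with
    (al * (snd q - (snd c + t1 * snd d)) + (1-al) * (snd q - (snd c + t2 * snd d))) by ring.
  rewrite <- norm_hom by lra. rewrite <- (norm_hom (1-al)) by lra.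
  apply norm_tri.
Qed.

Lemma ray_len c d t : 0 <= t -> pdist c (on_ray c d t) = t * sqrt (fst d ^2 + snd d ^2).
Proof.
  intro Ht. unfold pdist, on_ray; simpl fst; simpl snd.
  replace (fst c - (fst c + t * fst d)) with ((-t) * fst d) by ring.
  replace (snd c - (snd c + t * snd d)) with ((-t) * snd d) by ring.
  replace ((- t * fst d) ^ 2 + (- t * snd d) ^ 2) with ((t * fst d) ^ 2 + (t * snd d) ^ 2) by ring.
  apply norm_hom; auto.
Qed.

Lemma D_pos (d : point) : d <> (0,0) -> 0 < sqrt (fst d ^2 + snd d ^2).
Proof.
  intro H. apply sqrt_lt_R0. destruct d as [d1 d2]; simpl.
  destruct (Req_dec d1 0); destruct (Req_dec d2 0); subst; try (exfalso; auto; fail); nra.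
Qed.

Lemma mediant x1 x2 y1 y2 al be : 0 < y1 -> 0 < y2 -> 0 <= al -> 0 <= be -> al + be = 1 ->
  (al*x1+be*x2)/(al*y1+be*y2) <= Rmax (x1/y1) (x2/y2).
Proof.
  intros H1 H2 Ha Hb Hs.
  set (M := Rmax (x1/y1) (x2/y2)).
  assert (M1 : x1 / y1 <= M) by apply Rmax_l.
  assert (M2 : x2 / y2 <= M) by apply Rmax_r.
  assert (X1 : x1 <= M * y1).
  { replace x1 with (x1 / y1 * y1) by (field; lra). apply Rmult_le_compat_r; lra. }
  assert (X2 : x2 <= M * y2).
  { replace x2 with (x2 / y2 * y2) by (field; lra). apply Rmult_le_compat_r; lra. }
  assert (Hd : 0 < al*y1+be*y2).
  { destruct (Rle_lt_dec al 0).
    - replace al with 0 by lra. replace be with 1 by lra. lra.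
    - assert (0 < al * y1) by (apply Rmult_lt_0_compat; lra).
      assert (0 <= be * y2) by (apply Rmult_le_pos; lra). lra. }
  apply (Rmult_le_reg_r (al*y1+be*y2)); auto.
  unfold Rdiv. rewrite Rmult_assoc, Rinv_l by lra. nra.
Qed.

Lemma div_le n d d' : 0 <= n -> 0 < d' -> d' <= d -> n / d <= n / d'.
Proof.
  intros. unfold Rdiv. apply Rmult_le_compat_l; auto.
  apply Rinv_le_contravar; auto.
Qed.

Lemma den_pos tau u v w : admissible tau u v w -> 0 < pdist u v - tau * pdist v w.
Proof. intros [_ [_ H]]. lra. Qed.

Theorem lemma3 (tau : R) (u v : point) (Htau : 1 <= tau) (Huv : u <> v) :
  (* (1) compact arc of a circle centred at u *)
  (forall (r th1 th2 : R), 0 < r -> th1 <= th2 ->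
     (forall th, th1 <= th <= th2 -> admissible tau u v (on_circle u r th)) ->
     forall th0, th1 <= th0 <= th2 ->
       (forall th, th1 <= th <= th2 ->
          pdist v (on_circle u r th) <= pdist v (on_circle u r th0)) ->
       forall th, th1 <= th <= th2 ->
          ratio tau u v (on_circle u r th) <= ratio tau u v (on_circle u r th0))
  /\
  (* (2) compact segment of a ray emanating from v *)
  (forall (d : point) (a b : R), d <> (0, 0) -> 0 <= a -> a <= b ->
     (forall t, a <= t <= b -> admissible tau u v (on_ray v d t)) ->
     forall t0, a <= t0 <= b ->
       (forall t, a <= t <= b -> pdist v (on_ray v d t) <= pdist v (on_ray v d t0)) ->
       forall t, a <= t <= b ->
          ratio tau u v (on_ray v d t) <= ratio tau u v (on_ray v d t0))
  /\
  (* (3) compact segment of a ray emanating from u *)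
  (forall (d : point) (a b : R), d <> (0, 0) -> 0 <= a -> a <= b ->
     (forall t, a <= t <= b -> admissible tau u v (on_ray u d t)) ->
     exists t0, a <= t0 <= b /\
       ((forall t, a <= t <= b -> pdist u (on_ray u d t) <= pdist u (on_ray u d t0)) \/
        (forall t, a <= t <= b -> pdist u (on_ray u d t0) <= pdist u (on_ray u d t))) /\
       (forall t, a <= t <= b ->
          ratio tau u v (on_ray u d t) <= ratio tau u v (on_ray u d t0))).
Proof.
  split; [|split].
  - intros r th1 th2 Hr _ Hadm th0 Hth0 Hmax th Hth.
    assert (Ec : forall s, pdist u (on_circle u r s) = r).
    { intro s. unfold pdist, on_circle; simpl fst; simpl snd.
      replace ((fst u - (fst u + r * cos s)) ^ 2 + (snd u - (snd u + r * sin s)) ^ 2)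
        with (r * r * (Rsqr (sin s) + Rsqr (cos s))) by (unfold Rsqr; ring).
      rewrite sin2_cos2, Rmult_1_r. apply sqrt_square; lra. }
    unfold ratio. rewrite !Ec.
    apply div_le; [lra | apply den_pos, Hadm; auto |].
    specialize (Hmax th Hth).
    assert (tau * pdist v (on_circle u r th) <= tau * pdist v (on_circle u r th0))
      by (apply Rmult_le_compat_l; lra). lra.
  - intros d a b Hd Ha Hab Hadm t0 Ht0 Hmax t Ht.
    pose proof (D_pos d Hd) as HD. set (D := sqrt (fst d ^2 + snd d ^2)) in *.
    assert (Htt : t <= t0).
    { specialize (Hmax t Ht). rewrite !ray_len in Hmax by lra. fold D in Hmax.
      destruct (Rle_dec t t0); auto. exfalso. assert (t0 * D < t * D) by (apply Rmult_lt_compat_r; lra). lra. }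
    assert (Hp0 := den_pos _ _ _ _ (Hadm t0 Ht0)).
    assert (Hpt := den_pos _ _ _ _ (Hadm t Ht)).
    destruct (Req_dec t t0) as [->|Hne]; [lra|].
    assert (Ht0p : 0 < t0) by lra.
    set (be := t / t0). set (al := 1 - be).
    assert (Hbe : 0 <= be) by (unfold be; apply Rmult_le_pos; [lra| left; apply Rinv_0_lt_compat; lra]).
    assert (Hbe1 : be <= 1) by (unfold be; apply Rmult_le_reg_r with t0; [lra|];
                                unfold Rdiv; rewrite Rmult_assoc, Rinv_l; lra).
    assert (Et : t = al * 0 + be * t0) by (unfold al, be; field; lra).
    assert (Hc := ray_conv u v d al be 0 t0 ltac:(unfold al; lra) Hbe ltac:(unfold al; lra)).
    rewrite <- Et in Hc.
    assert (E0 : pdist u (on_ray v d 0) = pdist u v) by (unfold pdist, on_ray; simpl; f_equal; ring).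
    rewrite E0 in Hc.
    assert (HL : 0 < pdist u v).
    { assert (H := den_pos _ _ _ _ (Hadm t Ht)). assert (pdist v (on_ray v d t) >= 0)
        by (unfold pdist; apply Rle_ge, sqrt_pos). nra. }
    assert (Htri := pdist_tri u (on_ray v d t0) v).
    rewrite (pdist_sym (on_ray v d t0) v) in Htri.
    rewrite !ray_len in * by lra. repeat match goal with H: context[sqrt (fst d ^2 + snd d ^2)] |- _ => fold D in H end; try fold D.
    unfold ratio. rewrite !ray_len by lra. repeat match goal with H: context[sqrt (fst d ^2 + snd d ^2)] |- _ => fold D in H end; try fold D.
    set (N0 := pdist u (on_ray v d t0)) in *. set (Nt := pdist u (on_ray v d t)) in *.
    set (L := pdist u v) in *.
    assert (Eden : L - tau * (t * D) = al * L + be * (L - tau * (t0 * D))).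
    { rewrite Et. unfold al. ring. }
    assert (Hr1 : 1 <= N0 / (L - tau * (t0 * D))).
    { apply Rmult_le_reg_r with (L - tau * (t0 * D)); auto.
      replace (N0 / (L - tau * (t0 * D)) * (L - tau * (t0 * D))) with N0 by (field; lra).
      assert (t0 * D <= tau * (t0 * D)) by (assert (0 <= t0 * D) by nra; nra). lra. }
    apply Rle_trans with ((al * L + be * N0) / (al * L + be * (L - tau * (t0 * D)))).
    + rewrite Eden. unfold Rdiv. apply Rmult_le_compat_r; [left; apply Rinv_0_lt_compat; lra | lra].
    + eapply Rle_trans. apply mediant; auto; unfold al; lra.
      replace (L / L) with 1 by (field; lra). rewrite Rmax_right; lra.
  - intros d a b Hd Ha Hab Hadm.
    pose proof (D_pos d Hd) as HD. set (D := sqrt (fst d ^2 + snd d ^2)) in *.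
    assert (Key : forall t, a <= t <= b ->
       ratio tau u v (on_ray u d t) <= Rmax (ratio tau u v (on_ray u d a)) (ratio tau u v (on_ray u d b))).
    { intros t Ht.
      destruct (Req_dec a b) as [Eab|Nab].
      { replace t with a by lra. apply Rmax_l. }
      set (al := (b - t) / (b - a)). set (be := (t - a) / (b - a)).
      assert (Hal : 0 <= al) by (unfold al; apply Rmult_le_pos; [lra| left; apply Rinv_0_lt_compat; lra]).
      assert (Hbe : 0 <= be) by (unfold be; apply Rmult_le_pos; [lra| left; apply Rinv_0_lt_compat; lra]).
      assert (Hs : al + be = 1) by (unfold al, be; field; lra).
      assert (Et : t = al * a + be * b) by (unfold al, be; field; lra).
      assert (Hc := ray_conv v u d al be a b Hal Hbe Hs). rewrite <- Et in Hc.
      assert (Pa := den_pos _ _ _ _ (Hadm a ltac:(lra))).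
      assert (Pb := den_pos _ _ _ _ (Hadm b ltac:(lra))).
      assert (Pt := den_pos _ _ _ _ (Hadm t ltac:(lra))).
      unfold ratio in *. rewrite !ray_len in * by lra. repeat match goal with H: context[sqrt (fst d ^2 + snd d ^2)] |- _ => fold D in H end; try fold D.
      set (Na := pdist v (on_ray u d a)) in *. set (Nb := pdist v (on_ray u d b)) in *.
      set (Nt := pdist v (on_ray u d t)) in *. set (L := pdist u v) in *.
      apply Rle_trans with ((al * (a * D) + be * (b * D)) / (al * (L - tau * Na) + be * (L - tau * Nb))).
      + replace (al * (a * D) + be * (b * D)) with (t * D) by (rewrite Et; ring).
        replace (al * (L - tau * Na) + be * (L - tau * Nb)) with (L - tau * (al * Na + be * Nb))
          by (replace al with (1 - be) by lra; ring).
        assert (tau * Nt <= tau * (al * Na + be * Nb)) by (apply Rmult_le_compat_l; lra).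
        assert (Hpos : 0 < L - tau * (al * Na + be * Nb)).
        { replace (L - tau * (al * Na + be * Nb)) with (al * (L - tau * Na) + be * (L - tau * Nb))
            by (replace al with (1 - be) by lra; ring).
          destruct (Rle_lt_dec al 0).
          - replace al with 0 by lra. replace be with 1 by lra. lra.
          - assert (0 < al * (L - tau * Na)) by (apply Rmult_lt_0_compat; lra).
            assert (0 <= be * (L - tau * Nb)) by (apply Rmult_le_pos; lra). lra. }
        apply div_le; [apply Rmult_le_pos; lra | exact Hpos | lra].
      + apply mediant; auto. }
    destruct (Rle_dec (ratio tau u v (on_ray u d b)) (ratio tau u v (on_ray u d a))) as [Hle|Hgt].
    + exists a. split; [lra|]. split.
      * right. intros t Ht. rewrite !ray_len by lra. fold D. apply Rmult_le_compat_r; lra.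
      * intros t Ht. eapply Rle_trans; [apply Key; auto|]. rewrite Rmax_left; lra.
    + exists b. split; [lra|]. split.
      * left. intros t Ht. rewrite !ray_len by lra. fold D. apply Rmult_le_compat_r; lra.
      * intros t Ht. eapply Rle_trans; [apply Key; auto|]. rewrite Rmax_right; lra.
Qed.
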